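(* Suppose $\mathcal M$ is unichain. For every policy $\pi\subseteq\mathcal S$ and state $s\in\mathcal S$, the function $\lambda\mapsto\alpha^\pi_s(\lambda)$ (activation advantage of $s$ under $\pi$ in $\mathcal M(\lambda)$) is affine, and the absolute value of its slope is at most $2D(P^\pi)+1$.
   Context: Setting. An MDP is $\mathcal M=(\mathcal S,\{0,1\},(P^a)_a,(r^a)_a)$, finite $\mathcal S$, row-stochastic $P^0,P^1$, rewards $r^0,r^1\in\mathbb R^{\mathcal S}$. A policy is a subset $\pi\subseteq\mathcal S$ of states where action 1 is played, inducing $P^\pi$, $r^\pi$; $\mathcal M$ is unichain if every $P^\pi$ has a single recurrent class. For $\lambda\in\mathbb R$, $\mathcal M(\lambda)$ has the same transitions and rewards $r^1-\lambda\mathbf 1$ (action 1), $r^0$ (action 0). For a unichain policy, bias $b^\pi(\lambda)$ (up to additive constant) solves $g^\pi\mathbf 1+b^\pi=r^\pi+P^\pi b^\pi$ in $\mathcal M(\lambda)$; activation advantage $\alpha^\pi_s(\lambda)=r^1_s-\lambda-r^0_s+(P^1_{s,\cdot}-P^0_{s,\cdot})\cdot b^\pi(\lambda)$. Diameter of unichain $P$ with recurrent class $\mathcal S_r$: $D(P)=\max_{s\in\mathcal S,s'\in\mathcal S_r}\mathbb E^P[\tau_{s,s'}]$, $\tau_{s,s'}$ the number of steps to reach $s'$ from $s$. *)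

(* Defs.v *)
From HB Require Import structures.
From mathcomp Require Import all_boot all_order all_algebra.
From mathcomp Require Import all_classical all_reals all_analysis.
Set Implicit Arguments. Unset Strict Implicit. Unset Printing Implicit Defensive.
Import Order.TTheory GRing.Theory Num.Theory.
Local Open Scope ring_scope.

Section MDP.
Variables (R : realType) (S : finType).

Definition stochastic (P : S -> S -> R) : Prop :=
  (forall s t, 0 <= P s t) /\ (forall s, \sum_(t : S) P s t = 1).

Definition edge (P : S -> S -> R) : rel S := fun s t => 0 < P s t.
Definition reach (P : S -> S -> R) (s t : S) : bool := connect (edge P) s t.

(* recurrent state of a finite chain: every state reachable from s leads back to s
   (i.e. s lies in a closed communicating class) *)
Definition recurrent (P : S -> S -> R) (s : S) : bool :=
  [forall t, reach P s t ==> reach P t s].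

Definition unichain (P : S -> S -> R) : Prop :=
  forall s t, recurrent P s -> recurrent P t -> reach P s t.

(* policy pi = set of states where action 1 is played *)
Definition Ppol (P0 P1 : S -> S -> R) (pi : {set S}) : S -> S -> R :=
  fun s t => if s \in pi then P1 s t else P0 s t.

Definition rpol (r0 r1 : S -> R) (pi : {set S}) (lam : R) : S -> R :=
  fun s => if s \in pi then r1 s - lam else r0 s.

Definition unichain_mdp (P0 P1 : S -> S -> R) : Prop :=
  forall pi : {set S}, unichain (Ppol P0 P1 pi).

(* surv P s' n x = Pr_x(tau_{x,s'} > n) = Pr_x(X_0, ..., X_n all differ from s') *)
Fixpoint surv (P : S -> S -> R) (s' : S) (n : nat) (x : S) : R :=
  match n with
  | 0 => if x == s' then 0 else 1
  | n.+1 => if x == s' then 0 else \sum_(y : S) P x y * surv P s' n y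
  end.

(* E[tau_{s,s'}] = sum_{n >= 0} Pr(tau > n), in the extended reals *)
Definition hit_time (P : S -> S -> R) (s s' : S) : \bar R :=
  (\sum_(0 <= n <oo) (surv P s' n s)%:E)%E.

Definition diameter (P : S -> S -> R) : \bar R :=
  (\big[maxe/0%E]_(s : S) \big[maxe/0%E]_(s' : S | recurrent P s') hit_time P s s')%E.

Definition is_bias (P0 P1 : S -> S -> R) (r0 r1 : S -> R) (pi : {set S})
  (lam : R) (b : S -> R) : Prop :=
  exists g : R, forall s,
    g + b s = rpol r0 r1 pi lam s + \sum_(t : S) Ppol P0 P1 pi s t * b t.

Definition advantage (P0 P1 : S -> S -> R) (r0 r1 : S -> R) (s : S)
  (lam : R) (b : S -> R) : R :=
  r1 s - lam - r0 s + \sum_(t : S) (P1 s t - P0 s t) * b t.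

End MDP.

(* Main.v *)
Require Import Defs.
From HB Require Import structures.
From mathcomp Require Import all_boot all_order all_algebra.
From mathcomp Require Import all_classical all_reals all_analysis.
From mathcomp Require Import ring lra.
Import Order.TTheory GRing.Theory Num.Theory.
Local Open Scope ring_scope.
Set Implicit Arguments. Unset Strict Implicit.

Section H.
Variables (R : realType) (S : finType).
Implicit Types (P : S -> S -> R) (d : S -> R).

Lemma maxpt d (x0 : S) : exists x, forall y, d y <= d x.
Proof.
have := @arg_maxP _ _ _ x0 xpredT d isT.
case=> i _ H. exists i => y. exact: H. Qed.

Lemma stoch_le P d x : stochastic P -> (forall y, d y <= d x) ->
  \sum_t P x t * d t <= d x.
Proof.
move=> [P0 P1] Hx; rewrite -[leRHS]mul1r -(P1 x) mulr_suml.
by apply: ler_sum => t _; apply: ler_wpM2l.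
Qed.

Lemma max_close P d x t : stochastic P -> (forall y, d y <= d x) ->
  \sum_t P x t * d t = d x -> 0 < P x t -> d t = d x.
Proof.
move=> [P0 P1] Hx Hs Pt.
have E : \sum_t0 P x t0 * (d x - d t0) = 0.
  under eq_bigr do rewrite mulrBr.
  by rewrite sumrB -mulr_suml P1 mul1r Hs subrr.
have H0 : forall i, true -> 0 <= P x i * (d x - d i).
  by move=> i _; rewrite mulr_ge0 // subr_ge0.
have /eqP := @psumr_eq0P _ _ _ _ H0 E t isT; rewrite mulf_eq0 gt_eqF //= subr_eq0.
by move=> /eqP ->.
Qed.

Lemma max_reach P d x y : stochastic P -> (forall y, d y <= d x) ->
  (forall z, \sum_t P z t * d t = d z) -> reach P x y -> d y = d x.
Proof.
move=> hP Hx Hh /connectP [p]; elim: p x Hx => [|z p IH] x Hx /=.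
  by move=> _ ->.
move=> /andP [exz pz] ly.
have dz : d z = d x := @max_close P d x z hP Hx (Hh x) exz.
rewrite (IH z _ pz ly) // => w; rewrite dz; exact: Hx.
Qed.

Lemma reach_rec P x : exists y, reach P x y && recurrent P y.
Proof.
pose A := [pred y | reach P x y].
have Ax : x \in A by rewrite inE /reach connect0.
case: (@arg_minnP _ x A (fun y => #|[set z | reach P y z]|) Ax) => y Ay Hmin.
have Ay2 : reach P x y := Ay.
exists y; rewrite Ay2 /=; apply/forallP => t; apply/implyP => yt.
have sub : [set z | reach P t z] \subset [set z | reach P y z].
  by apply/fintype.subsetP => z; rewrite !inE => tz; apply: connect_trans yt tz.
have At : t \in A by rewrite inE; apply: connect_trans Ay2 yt.
have := Hmin t At => le.
have /eqP eq : [set z | reach P t z] == [set z | reach P y z] by rewrite eqEcard sub le.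
have : y \in [set z | reach P y z] by rewrite inE /reach connect0.
by rewrite -eq inE.
Qed.


Lemma harm_const P (g : R) d : stochastic P -> unichain P ->
  (forall x, g + d x = \sum_t P x t * d t) -> forall x y, d x = d y.
Proof.
move=> hP hu E x0.
have [xM HM] := maxpt d x0.
have [xm Hm] := maxpt (fun z => - d z) x0.
have g0 : g <= 0.
  have := stoch_le hP HM; rewrite -E; lra.
have g1 : 0 <= g.
  have := stoch_le hP Hm; under eq_bigr do rewrite mulrN.
  rewrite sumrN -E; lra.
have Hh : forall z, \sum_t P z t * d t = d z.
  by move=> z; rewrite -E; lra.
have Hh' : forall z, \sum_t P z t * - d t = - d z.
  by move=> z; under eq_bigr do rewrite mulrN; rewrite sumrN Hh.
have [r /andP [xr rr]] := reach_rec P xM.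
have [r' /andP [xr' rr']] := reach_rec P xm.
have e1 : d r' = d xM.
  apply: (max_reach hP HM Hh); apply: connect_trans xr (hu _ _ rr rr').
have e2 : - d r' = - d xm := max_reach hP Hm Hh' xr'.
have eq : d xm = d xM by lra.
suff H : forall z, d z = d xM by move=> y; rewrite !H.
move=> z; apply/eqP; rewrite eq_le HM /=.
have := Hm z; rewrite eq; lra.
Qed.

Lemma sum_lin (a u v w : S -> R) l :
  \sum_t a t * (u t - v t - l * (w t - v t)) =
  \sum_t a t * u t - \sum_t a t * v t - l * (\sum_t a t * w t - \sum_t a t * v t).
Proof.
rewrite -!sumrB mulr_sumr -sumrB; apply: eq_bigr => t _; ring.
Qed.

Lemma sum_lin2 (a u w : S -> R) l c :
  \sum_t a t * (u t + l * w t + c) =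
  \sum_t a t * u t + l * \sum_t a t * w t + c * \sum_t a t.
Proof.
rewrite mulr_sumr mulr_sumr -!big_split; apply: eq_bigr => t _ /=; ring.
Qed.


Lemma surv_ge0 P s' n x : stochastic P -> 0 <= surv P s' n x.
Proof.
move=> [P0 _]; elim: n x => [|n IH] x /=; case: eqP => // _.
by apply: sumr_ge0 => y _; apply: mulr_ge0.
Qed.

Lemma small_tail (a : nat -> R) r (dl : R) :
  (forall N, \sum_(0 <= k < N) a k <= r) -> 0 < dl -> exists n, a n <= dl.
Proof.
move=> Hs d0; apply: contrapT => nH.
have Ha : forall n, dl < a n.
  by move=> n; rewrite ltNge; apply/negP => H; apply: nH; exists n.
pose N := (Num.truncn (r / dl)).+1.
have h1 : N%:R * dl <= \sum_(0 <= k < N) a k.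
  apply: (@le_trans _ _ (\sum_(0 <= k < N) dl)).
    by rewrite sumr_const_nat subn0 mulr_natl.
  by apply: ler_sum => k _; apply: ltW.
have h2 : r / dl < N%:R := truncnS_gt _.
rewrite ltr_pdivrMr // in h2.
have := Hs N; lra.
Qed.


Lemma hit_bound P (f : S -> R) (gh : R) (h : S -> R) (x0 : S) :
  stochastic P -> (forall x, -1 <= f x <= 0) ->
  (forall x, gh + h x = f x + \sum_t P x t * h t) ->
  exists s', recurrent P s' /\
    forall x, (`|h x - h s'|%:E <= hit_time P x s')%E.
Proof.
move=> hP Hf E.
have [xM HM] := maxpt h x0.
have [xm Hm] := maxpt (fun z => - h z) x0.
have gle : gh <= 0.
  have := stoch_le hP HM; have := E xM; have /andP := Hf xM; lra.
have gge : -1 <= gh.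
  have := stoch_le hP Hm; under eq_bigr do rewrite mulrN.
  rewrite sumrN; have := E xm; have /andP := Hf xm; lra.
have [s' /andP [_ rs']] := reach_rec P x0.
exists s'; split => //.
pose u := fun z => h z - h s'.
have Eu : forall x, u x = (f x - gh) + \sum_t P x t * u t.
  move=> x; rewrite /u; under eq_bigr do rewrite mulrBr.
  rewrite sumrB -mulr_suml hP.2 mul1r; have := E x; lra.
have ef : forall x, `|f x - gh| <= 1.
  by move=> x; have /andP := Hf x => - [a b]; rewrite ler_norml; apply/andP; split; lra.
have [xa Ha] := maxpt (fun z => `|u z|) x0.
pose M := `|u xa|.
have M0 : 0 <= M by apply: normr_ge0.
have us : u s' = 0 by rewrite /u subrr.
have claim : forall n x, `|u x| <= \sum_(0 <= k < n) surv P s' k x + M * surv P s' n x.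
  elim => [|n IH] x.
    rewrite big_geq // add0r /=; case: eqP => [->|_].
      by rewrite us normr0 mulr0.
    by rewrite mulr1; apply: Ha.
  case: (x =P s') => [->|nx].
    rewrite us normr0; apply: addr_ge0; last by apply: mulr_ge0 => //; apply: surv_ge0.
    by apply: sumr_ge0 => k _; apply: surv_ge0.
  have nx' : (x == s') = false by apply/eqP.
  rewrite big_nat_recl //= nx'.
  have sS : forall k, surv P s' k.+1 x = \sum_y P x y * surv P s' k y.
    by move=> k /=; rewrite nx'.
    rewrite exchange_big /= -addrA mulr_sumr -big_split /=.
  rewrite Eu; apply: (le_trans (ler_normD _ _)); apply: lerD; first exact: ef.
  apply: (le_trans (ler_norm_sum _ _ _)); apply: ler_sum => y _.
  rewrite normrM (ger0_norm (hP.1 x y)).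
  rewrite [X in _ <= X](_ : _ = P x y * (\sum_(0 <= k < n) surv P s' k y + M * surv P s' n y)); last first.
    by rewrite mulrDr mulr_sumr; ring.
  by apply: ler_wpM2l; [exact: hP.1 | exact: IH].
move=> x.
have ge0 : (0 <= hit_time P x s')%E.
  by apply: nneseries_ge0 => k _ _; rewrite lee_fin surv_ge0.
case Ht: (hit_time P x s') => [r| |]; last by rewrite Ht in ge0.
  rewrite lee_fin.
  have part : forall N, \sum_(0 <= k < N) surv P s' k x <= r.
    move=> N; rewrite -lee_fin -sumEFin -Ht.
    by apply: nneseries_lim_ge => k _ _; rewrite lee_fin surv_ge0.
  apply/ler_addgt0Pr => e e0.
  have M1 : 0 < M + 1 by lra.
  have [n Hn] := small_tail part (divr_gt0 e0 M1).
  have h1 : M * surv P s' n x <= M * (e / (M + 1)) by apply: ler_wpM2l.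
  have h2 : M * (e / (M + 1)) <= e.
    rewrite mulrA ler_pdivrMr //; nra.
  have := claim n x; have := part n; rewrite /u; lra.
by rewrite leey.
Qed.


Lemma sum_norm_le P x (u : S -> R) dd : stochastic P -> (forall t, `|u t| <= dd) ->
  `|\sum_t P x t * u t| <= dd.
Proof.
move=> hP Hu; apply: (le_trans (ler_norm_sum _ _ _)).
rewrite -[leRHS]mul1r -(hP.2 x) mulr_suml; apply: ler_sum => t _.
by rewrite normrM (ger0_norm (hP.1 x t)); apply: ler_wpM2l; [exact: hP.1|].
Qed.

End H.

Unset Implicit Arguments.

Theorem mainTheorem8 (R : realType) (S : finType)
  (P0 P1 : S -> S -> R) (r0 r1 : S -> R) :
  stochastic P0 -> stochastic P1 -> unichain_mdp P0 P1 ->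
  forall (pi : {set S}) (s : S) (b : R -> S -> R),
    (forall lam : R, is_bias P0 P1 r0 r1 pi lam (b lam)) ->
    exists c0 c1 : R,
      (forall lam : R, advantage P0 P1 r0 r1 s lam (b lam) = c0 + c1 * lam) /\
      (`|c1|%:E <= 2%:E * diameter (Ppol P0 P1 pi) + 1%:E)%E.
Proof.
move=> hP0 hP1 hU pi s b hb.
set P := Ppol P0 P1 pi.
have hP : stochastic P.
  split => [x t|x]; rewrite /P /Ppol; case: (x \in pi).
  - exact: hP1.1.
  - exact: hP0.1.
  - exact: hP1.2.
  - exact: hP0.2.
have hu : unichain P := hU pi.
have [g0 E0] := hb 0; have [g1 E1] := hb 1.
pose h t := b 1 t - b 0 t.
have El : forall lam, exists c, forall t, b lam t = b 0 t + lam * h t + c.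
  move=> lam; have [gl Eg] := hb lam.
  pose d t := b lam t - b 0 t - lam * (b 1 t - b 0 t).
  have Ed : forall x, (gl - g0 - lam * (g1 - g0)) + d x = \sum_t P x t * d t.
    move=> x; rewrite /d sum_lin.
    have rp : rpol r0 r1 pi lam x - rpol r0 r1 pi 0 x
       - lam * (rpol r0 r1 pi 1 x - rpol r0 r1 pi 0 x) = 0.
      by rewrite /rpol; case: ifP => _; ring.
    have e1 : \sum_t P x t * b lam t = gl + b lam x - rpol r0 r1 pi lam x.
      by rewrite (Eg x); ring.
    have e2 : \sum_t P x t * b 0 t = g0 + b 0 x - rpol r0 r1 pi 0 x.
      by rewrite (E0 x); ring.
    have e3 : \sum_t P x t * b 1 t = g1 + b 1 x - rpol r0 r1 pi 1 x.
      by rewrite (E1 x); ring.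
    rewrite e1 e2 e3; move: rp.
    set A := rpol r0 r1 pi lam x; set B := rpol r0 r1 pi 0 x.
    set C := rpol r0 r1 pi 1 x => rp.
    have -> : A = B + lam * (C - B) by rewrite -[A]subr0 -rp; ring.
    ring.
  have Hc := harm_const hP hu Ed.
  exists (d s) => t; rewrite -(Hc t s) /d /h; ring.
have q0 : \sum_t (P1 s t - P0 s t) = 0 by rewrite sumrB hP1.2 hP0.2 subrr.
exists (r1 s - r0 s + \sum_t (P1 s t - P0 s t) * b 0 t).
exists (-1 + \sum_t (P1 s t - P0 s t) * h t).
split.
  move=> lam; have [c Hc] := El lam; rewrite /advantage.
  under eq_bigr do rewrite Hc.
  rewrite sum_lin2 q0; ring.
pose f x := rpol r0 r1 pi 1 x - rpol r0 r1 pi 0 x.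
have Hf : forall x, -1 <= f x <= 0.
  by move=> x; rewrite /f /rpol; case: ifP => _; apply/andP; split; lra.
have Eh : forall x, (g1 - g0) + h x = f x + \sum_t P x t * h t.
  move=> x; rewrite /h /f; under eq_bigr do rewrite mulrBr.
  rewrite sumrB; have := E0 x; have := E1 x; rewrite /f; lra.
have [s' [rs' Hb]] := hit_bound s hP Hf Eh.
have c1E : \sum_t (P1 s t - P0 s t) * h t = \sum_t P1 s t * (h t - h s') - \sum_t P0 s t * (h t - h s').
  rewrite -sumrB; apply/eqP; rewrite -subr_eq0 -sumrB.
  rewrite (eq_bigr (fun t => (P1 s t - P0 s t) * h s')); last by move=> t _; ring.
  by rewrite -mulr_suml q0 mul0r.
have hD : forall x, (hit_time P x s' <= diameter P)%E.
  move=> x; rewrite /diameter.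
  apply: (le_trans _ (le_bigmax _ _ x)).
  exact: (le_bigmax_cond _ _ rs').
have ge0 : (0 <= hit_time P s' s')%E.
  by apply: nneseries_ge0 => k _ _; rewrite lee_fin surv_ge0.
case HD : (diameter P) => [dd| |]; last first.
- by have := hD s'; rewrite HD => /(le_trans ge0).
- by rewrite gt0_muley ?lte_fin // addye // leey.
have Hu : forall t, `|h t - h s'| <= dd.
  by move=> t; rewrite -lee_fin -HD; apply: le_trans (Hb t) (hD t).
rewrite -EFinM -EFinD lee_fin c1E.
have := sum_norm_le s hP1 Hu; have := sum_norm_le s hP0 Hu.
set A := \sum_t P1 s t * (h t - h s'); set B := \sum_t P0 s t * (h t - h s').
move=> hB hA; apply: (le_trans (ler_normD _ _)); rewrite normrN normr1.
have := ler_normB A B; lra.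
Qed.
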